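(* Let $G$ be a finite group, $f\in\mathrm{Aut}(G)$, and $\Lambda$ a subgroup of $\mathrm{Fix}(G,f)=\{x\in G: f(x)=x\}$. Then there is a function $\phi:\mathscr{H}(G,\Lambda,f)\times\mathscr{H}(G,\Lambda,f)\to\Lambda$ such that $\Lambda\times_\phi\mathscr{H}(G,\Lambda,f)$ is a quandle and $$\mathrm{GAlex}(G,f)\cong\Lambda\times_\phi\mathscr{H}(G,\Lambda,f),$$ and the projection $\pi:\Lambda\times_\phi\mathscr{H}(G,\Lambda,f)\to\mathscr{H}(G,\Lambda,f)$, $(\lambda,\Lambda g)\mapsto\Lambda g$, is equivalent to $p_\Lambda:\mathrm{GAlex}(G,f)\to\mathscr{H}(G,\Lambda,f)$, $p_\Lambda(g)=\Lambda g$. Moreover, if $\Lambda=\mathrm{Fix}(G,f)$, then $\pi$ is equivalent to $\mathrm{inn}:\mathrm{GAlex}(G,f)\to\mathrm{inn}(\mathrm{GAlex}(G,f))$.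
   Context: A quandle is a set with operation $*$ satisfying $a*a=a$; unique right division; $(a*b)*c=(a*c)*(b*c)$. $R_a(y)=y*a$; $\mathrm{inn}(a)=R_a$, and $\mathrm{inn}(Q)=\{R_a\}$ is a quandle with $R_a*R_b=R_{a*b}$. $\mathrm{GAlex}(G,f)$ is the quandle on $G$ with $a*b=f(ab^{-1})b$. For a subgroup $H\le\mathrm{Fix}(G,f)$, $\mathscr{H}(G,H,f)$ is the quandle on the right cosets $\{Hg\}$ with $Ha*Hb=Hf(ab^{-1})b$. For a quandle $X$ and a (not necessarily abelian) group $\Lambda$, and a function $\phi:X\times X\to\Lambda$, $\Lambda\times_\phi X$ denotes $\Lambda\times X$ with $(\lambda,a)*(\mu,b)=(\lambda\phi(a,b),a*b)$ (when this is a quandle). Homomorphisms $f_1:A\to B$, $f_2:C\to D$ are equivalent if there are isomorphisms $i:A\to C$, $j:B\to D$ with $j f_1=f_2 i$. *)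

(* Defs.v *)
From HB Require Import structures.
From mathcomp Require Import all_boot all_order all_fingroup.
Set Implicit Arguments. Unset Strict Implicit. Unset Printing Implicit Defensive.
Local Open Scope group_scope.

Definition is_quandle (X : Type) (op : X -> X -> X) : Prop :=
  [/\ (forall a, op a a = a),
      (forall b, bijective (fun y => op y b))
    & (forall a b c, op (op a b) c = op (op a c) (op b c))].

Definition qiso (A C : Type) (opA : A -> A -> A) (opC : C -> C -> C) (i : A -> C) : Prop :=
  bijective i /\ forall x y, i (opA x y) = opC (i x) (i y).

Definition hom_equiv (A B C D : Type) (opA : A -> A -> A) (opB : B -> B -> B)
  (opC : C -> C -> C) (opD : D -> D -> D) (f1 : A -> B) (f2 : C -> D) : Prop :=
  exists (i : A -> C) (j : B -> D),
    [/\ qiso opA opC i, qiso opB opD j & forall x, j (f1 x) = f2 (i x)].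

Definition galex_op (gT : finGroupType) (f : gT -> gT) (a b : gT) : gT :=
  f (a * b^-1) * b.

Definition Fix (gT : finGroupType) (f : gT -> gT) : {set gT} := [set x | f x == x].

Definition Hcar (gT : finGroupType) (L : {set gT}) :=
  {A : {set gT} | A \in rcosets L [set: gT]}.

Lemma rcoset_in_rcosets (gT : finGroupType) (L : {set gT}) (x : gT) :
  L :* x \in rcosets L [set: gT].
Proof. by rewrite -rcosetE /rcosets imset_f ?in_setT. Qed.

Definition pcos (gT : finGroupType) (L : {set gT}) (g : gT) : Hcar L :=
  exist _ (L :* g) (rcoset_in_rcosets L g).

Definition Hop (gT : finGroupType) (f : gT -> gT) (L : {set gT}) (A B : Hcar L) : Hcar L :=
  pcos L (galex_op f (repr (val A)) (repr (val B))).

Definition ext_op (Lam : finGroupType) (X : Type) (opX : X -> X -> X)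
  (phi : X -> X -> Lam) (p q : Lam * X) : Lam * X :=
  (p.1 * phi p.2 q.2, opX p.2 q.2).

(* ---------- inn(Q) = {R_a} with R_a * R_b = R_{a*b} ---------- *)
Definition Rff (X : finType) (op : X -> X -> X) (a : X) : {ffun X -> X} :=
  [ffun y => op y a].

Definition inn_car (X : finType) (op : X -> X -> X) :=
  {g : {ffun X -> X} | g \in codom (Rff op)}.

Definition inn (X : finType) (op : X -> X -> X) (a : X) : inn_car op :=
  exist _ (Rff op a) (codom_f (Rff op) a).

Definition inn_op (X : finType) (op : X -> X -> X) (g h : inn_car op) : inn_car op :=
  inn op (op (iinv (valP g)) (iinv (valP h))).

Arguments Hop {gT} f L A B.
Arguments pcos {gT} L g.
Arguments inn {X} op a.
Arguments inn_op {X} op g h.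
Arguments ext_op {Lam X} opX phi p q.
Arguments galex_op {gT} f a b.

(* Main.v *)
Require Import Defs.
From mathcomp Require Import all_boot all_order all_fingroup.
Set Implicit Arguments. Unset Strict Implicit. Unset Printing Implicit Defensive.
Local Open Scope group_scope.

Lemma qiso_quandle A C opA opC (i : A -> C) :
  qiso opA opC i -> is_quandle opA -> is_quandle opC.
Proof.
case=> [[j ij ji] hom] [idem rdiv dist].
have opCE x y : opC x y = i (opA (j x) (j y)) by rewrite hom !ji.
split.
- by move=> a; rewrite opCE idem ji.
- move=> b; case: (rdiv (j b)) => g h1 h2.
  exists (fun z => i (g (j z))) => z /=.
  + by rewrite opCE ij h1 ji.
  + by rewrite opCE ij h2 ji.
- by move=> a b c; rewrite !opCE !ij dist.
Qed.

Lemma qiso_inv A C opA opC (i : A -> C) (k : C -> A) : cancel i k -> cancel k i ->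
  (forall x y, k (opC x y) = opA (k x) (k y)) -> qiso opA opC i /\ qiso opC opA k.
Proof.
move=> ik ki hom; split; split.
- by exists k.
- move=> x y; apply: (can_inj ki); by rewrite ik hom !ik.
- by exists i.
- exact: hom.
Qed.

Section G.
Variables (gT : finGroupType) (f : gT -> gT) (finv : gT -> gT).
Hypothesis Hm : {morph f : x y / x * y}.
Hypothesis fK : cancel f finv.
Hypothesis fKV : cancel finv f.

Lemma f1 : f 1 = 1.
Proof. by apply: (mulgI (f 1)); rewrite -Hm !mulg1. Qed.

Lemma fV x : f x^-1 = (f x)^-1.
Proof. by apply: (mulgI (f x)); rewrite -Hm !mulgV f1. Qed.

Lemma galex_quandle : is_quandle (galex_op f).
Proof.
rewrite /galex_op; split.
- by move=> a; rewrite mulgV f1 mul1g.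
- move=> b; exists (fun z => finv (z * b^-1) * b) => z.
  + by rewrite mulgK fK mulgKV.
  + by rewrite mulgK fKV mulgKV.
- move=> a b c.
  have -> : f (a * c^-1) * c * (f (b * c^-1) * c)^-1 = f (a * b^-1).
    by rewrite invMg mulgA mulgK -fV invMg invgK -Hm mulgA mulgKV.
  by rewrite -(mulgA (f (a * b^-1))) [f (_ * (b * c^-1))]Hm mulgA.
Qed.
End G.

Section Main.
Variables (gT : finGroupType) (f : {perm gT}) (L : {group gT}).
Hypothesis Hm : {morph f : x y / x * y}.
Hypothesis HL : L \subset Fix f.

Lemma fixL x : x \in L -> f x = x.
Proof. by move/(subsetP HL); rewrite inE => /eqP. Qed.

Definition sec (A : Hcar L) : gT := repr (val A).

Lemma secP A : L :* sec A = val A.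
Proof.
rewrite /sec; case: A => A /= /rcosetsP [x _ ->].
by apply/rcoset_eqP; exact: mem_repr_rcoset.
Qed.

Lemma pcos_sec A : pcos L (sec A) = A.
Proof. by apply: val_inj; rewrite /= secP. Qed.

Lemma pcosM l x : l \in L -> pcos L (l * x) = pcos L x.
Proof. by move=> Hl; apply: val_inj => /=; apply/rcoset_eqP; rewrite mem_rcoset mulgK. Qed.

Lemma secL x : sec (pcos L x) * x^-1 \in L.
Proof. by rewrite -mem_rcoset; exact: mem_repr_rcoset. Qed.

Lemma cosL x : x * (sec (pcos L x))^-1 \in L.
Proof. by rewrite -[x * _]invgK invMg invgK groupV secL. Qed.

Definition phi (A B : Hcar L) : subg_of L :=
  subg L (galex_op f (sec A) (sec B) * (sec (Hop f L A B))^-1).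

Definition kk (p : subg_of L * Hcar L) : gT := sgval p.1 * sec p.2.
Definition ii (g : gT) : subg_of L * Hcar L :=
  (subg L (g * (sec (pcos L g))^-1), pcos L g).

Lemma iiK : cancel ii kk.
Proof. by move=> g; rewrite /kk /ii /= subgK ?cosL // mulgKV. Qed.

Lemma kkK : cancel kk ii.
Proof.
case=> l A; rewrite /kk /ii /= pcosM ?subgP // pcos_sec mulgK sgvalK //.
Qed.

Lemma kk_morph x y : kk (ext_op (Hop f L) phi x y) = galex_op f (kk x) (kk y).
Proof.
case: x => l A; case: y => m B; rewrite /kk /ext_op /= /phi.
rewrite subgK; last exact: cosL.
rewrite -mulgA mulgKV /galex_op invMg !mulgA; congr (_ * _).
rewrite -(mulgA (sgval l) (sec A)) [f (_ * (sgval m)^-1)]Hm [f (sgval l * _)]Hm.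
by rewrite (fV Hm) (fixL (subgP l)) (fixL (subgP m)) mulgKV.
Qed.

Notation gop := (galex_op f).

Lemma innFix l a : l \in Fix f -> inn gop (l * a) = inn gop a.
Proof.
rewrite inE => /eqP fl; apply: val_inj => /=; apply/ffunP => y; rewrite !ffunE /galex_op.
by rewrite invMg (mulgA y) [f (_ * l^-1)]Hm (fV Hm) fl -mulgA (mulgA l^-1) mulVg mul1g.
Qed.

Lemma Rff_fix a b : Rff gop a = Rff gop b -> a * b^-1 \in Fix f.
Proof.
move/ffunP/(_ a); rewrite !ffunE /galex_op mulgV (f1 Hm) mul1g => e.
rewrite inE; apply/eqP; apply: (mulIg b); by rewrite -e mulgKV.
Qed.

Lemma Rff_galex a a' b b' : Rff gop a' = Rff gop a -> Rff gop b' = Rff gop b ->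
  Rff gop (gop a' b') = Rff gop (gop a b).
Proof.
move=> /ffunP ea /ffunP eb; apply/ffunP => y; rewrite !ffunE.
case: (galex_quandle Hm (permK f) (permKV f)) => _ rdiv dist.
case: (rdiv b) => g _ gK.
rewrite -(gK y).
have e1 := eb (g y); rewrite !ffunE in e1.
rewrite -{1}e1 -!dist.
have e2 := ea (g y); rewrite !ffunE in e2.
rewrite e2.
have e3 := eb (gop (g y) a); rewrite !ffunE in e3.
by rewrite e3.
Qed.

Lemma inn_sec x : inn gop (sec (pcos L x)) = inn gop x.
Proof.
rewrite -{1}[sec (pcos L x)](mulgKV x) innFix //.
exact: (subsetP HL _ (secL x)).
Qed.

Definition jj (A : Hcar L) : inn_car gop := inn gop (sec A).
Definition jinv (g : inn_car gop) : Hcar L := pcos L (iinv (valP g)).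

Lemma jj_morph A B : jj (Hop f L A B) = inn_op gop (jj A) (jj B).
Proof.
rewrite /jj /Hop inn_sec /inn_op; apply: val_inj => /=.
apply: esym; apply: Rff_galex.
- exact: (f_iinv (valP (inn gop (sec A)))).
- exact: (f_iinv (valP (inn gop (sec B)))).
Qed.

Lemma jjK : cancel jinv jj.
Proof.
move=> g; rewrite /jj /jinv inn_sec; apply: val_inj => /=.
exact: f_iinv.
Qed.

Lemma jinvK : L :=: Fix f -> cancel jj jinv.
Proof.
move=> eL A; rewrite /jj /jinv.
set a := iinv _.
have e : Rff gop a = Rff gop (sec A) by rewrite /a f_iinv.
have := Rff_fix e; rewrite -eL => Hl.
by rewrite -[a](mulgKV (sec A)) pcosM // pcos_sec.
Qed.
End Main.

Theorem mainTheorem9 (gT : finGroupType) (f : {perm gT}) (L : {group gT}) :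
  f \in Aut [set: gT] -> L \subset Fix f ->
  exists phi : Hcar L -> Hcar L -> subg_of L,
    [/\ is_quandle (ext_op (Hop f L) phi),
        (exists i : gT -> subg_of L * Hcar L,
            qiso (galex_op f) (ext_op (Hop f L) phi) i),
        hom_equiv (ext_op (Hop f L) phi) (Hop f L) (galex_op f) (Hop f L)
                  snd (pcos L)
      & (L :=: Fix f ->
         hom_equiv (ext_op (Hop f L) phi) (Hop f L)
                   (galex_op f) (inn_op (galex_op f))
                   snd (inn (galex_op f)))].
Proof.
move=> fA HL.
have Hm : {morph f : x y / x * y}.
  by move=> x y; apply: (morphicP (Aut_morphic fA)); rewrite inE.
exists (@phi gT f L).
have [isoI isoK] := qiso_inv (@iiK gT L) (@kkK gT L) (@kk_morph gT f L Hm HL).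
split.
- exact: qiso_quandle isoI (galex_quandle Hm (permK f) (permKV f)).
- by exists (@ii gT L).
- exists (@kk gT L), id; split => //.
  + by split => //; exists id.
  + by case=> l A; rewrite /kk /= pcosM ?subgP // pcos_sec.
- move=> eL; exists (@kk gT L), (@jj gT f L); split => //.
  + split; first by exists (@jinv gT f L); [exact: (@jinvK gT f L Hm eL) | exact: (@jjK gT f L Hm HL)].
    exact: (@jj_morph gT f L Hm HL).
  + case=> l A; rewrite /kk /jj /= (@innFix gT f Hm) //.
    by rewrite -eL subgP.
Qed.
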